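(* Let $N>0$; all statements below concern $\tau\in(0,1)$. (i) There exists a unique $\tau_1^{(1)}\in(\frac12,\frac1{\sqrt2})$ such that $\beta_2^*(\tau)-\tau\beta_1^{**}(\tau)=2$ holds if and only if $\tau=\tau_1^{(1)}$; equivalently, [$\beta_2^*(\tau)=\underline\beta_2(\tau)$ and $\beta_1^{**}(\tau)=\overline\beta_1(\tau)$] holds if and only if $\tau=\tau_1^{(1)}$. More precisely, $\beta_2^*(\tau)-\tau\beta_1^{**}(\tau)>2$ if and only if $\tau\in(0,\tau_1^{(1)})$, and $0<\beta_1^{**}(\tau)<\overline\beta_1(\tau)$ for all $\tau\in(0,1)\setminus\{\tau_1^{(1)}\}$. (ii) There exists a unique $\tau_1^{(2)}\in(\frac12,\frac1{\sqrt2})$ such that $\beta_1^*(\tau)-\tau\beta_2^{**}(\tau)=2(N+1)$ holds if and only if $\tau=\tau_1^{(2)}$; equivalently, [$\beta_1^*(\tau)=\underline\beta_1(\tau)$ and $\beta_2^{**}(\tau)=\overline\beta_2(\tau)$] holds if and only if $\tau=\tau_1^{(2)}$. More precisely, $\beta_1^*(\tau)-\tau\beta_2^{**}(\tau)>2(N+1)$ if and only if $\tau\in(0,\tau_1^{(2)})$, and $0<\beta_2^{**}(\tau)<\overline\beta_2(\tau)$ for all $\tau\in(0,1)\setminus\{\tau_1^{(2)}\}$. Moreover $\frac12<\tau_1^{(2)}<\tau_1^{(1)}<\frac1{\sqrt2}$.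
   Context: With $D=(N+1)^2+2\tau(N+1)+1$: $$\underline\beta_1(\tau)=\tfrac{2}{1-\tau^2}(N+1+\tau+\tau\sqrt D),\qquad \overline\beta_1(\tau)=\tfrac{2}{1-\tau^2}(N+1+\tau+\sqrt D),$$ $$\underline\beta_2(\tau)=\tfrac{2}{1-\tau^2}(1+\tau(N+1)+\tau\sqrt D),\qquad \overline\beta_2(\tau)=\tfrac{2}{1-\tau^2}(1+\tau(N+1)+\sqrt D);$$ $$\beta_1^*(\tau)=4(N+1)+8\tau,\quad \beta_2^*(\tau)=4+8\tau(N+1),\quad \beta_1^{**}(\tau)=8\tau(1+2\tau(N+1)),\quad \beta_2^{**}(\tau)=8\tau(N+1+2\tau).$$ *)

(* Defs.v *)
From HB Require Import structures.
From mathcomp Require Import all_boot all_order all_algebra.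
From mathcomp Require Import reals.
Set Implicit Arguments. Unset Strict Implicit. Unset Printing Implicit Defensive.
Import Order.TTheory GRing.Theory Num.Theory.
Local Open Scope ring_scope.

Section Betas.
Variables (R : realType) (N : nat).
Let n1 : R := (N.+1)%:R.

Definition Dd (t : R) : R := n1 ^+ 2 + 2 * t * n1 + 1.

Definition beta1_low (t : R) : R :=
  2 / (1 - t ^+ 2) * (n1 + t + t * Num.sqrt (Dd t)).
Definition beta1_up (t : R) : R :=
  2 / (1 - t ^+ 2) * (n1 + t + Num.sqrt (Dd t)).
Definition beta2_low (t : R) : R :=
  2 / (1 - t ^+ 2) * (1 + t * n1 + t * Num.sqrt (Dd t)).
Definition beta2_up (t : R) : R :=
  2 / (1 - t ^+ 2) * (1 + t * n1 + Num.sqrt (Dd t)).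

Definition beta1_s (t : R) : R := 4 * n1 + 8 * t.
Definition beta2_s (t : R) : R := 4 + 8 * t * n1.
Definition beta1_ss (t : R) : R := 8 * t * (1 + 2 * t * n1).
Definition beta2_ss (t : R) : R := 8 * t * (n1 + 2 * t).
End Betas.

(* Main.v *)
Require Import Defs.
From HB Require Import structures.
From mathcomp Require Import all_boot all_order all_algebra.
From mathcomp Require Import reals ring lra.
Import Order.TTheory GRing.Theory Num.Theory.
Local Open Scope ring_scope.
Section S.
Variable R : realType.
Implicit Types a s t : R.
Definition fA a t := 1 + 4*a*t - 4*t^+2 - 8*a*t^+3.
Definition gA a t := a + 4*t - 4*a*t^+2 - 8*t^+3.

Lemma fA_pos a t : 1 < a -> 0 < t -> t <= 2^-1 -> 0 < fA a t.
Proof.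
move=> ha ht th. rewrite /fA.
have h1 : 0 <= 1 - 4 * t^+2 by nra.
have h2 : 0 < 4*a*t*(1 - 2*t^+2) by apply: mulr_gt0; nra.
nra.
Qed.

Lemma gA_pos a t : 1 < a -> 0 < t -> t <= 2^-1 -> 0 < gA a t.
Proof.
move=> ha ht th. rewrite /gA.
have h1 : 0 <= a*(1 - 4 * t^+2) by apply: mulr_ge0; nra.
have h2 : 0 < 4*t*(1 - 2*t^+2) by apply: mulr_gt0; nra.
nra.
Qed.

Lemma fA_dec a s t : 1 < a -> 2^-1 <= s -> s < t -> fA a t < fA a s.
Proof.
move=> ha hs st.
have E : fA a s - fA a t = (t-s)*(-4*a + 4*(s+t) + 8*a*(s^+2+s*t+t^+2)) by rewrite /fA; ring.
have B : 0 < -4*a + 4*(s+t) + 8*a*(s^+2+s*t+t^+2).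
  have : 3/4 <= s^+2+s*t+t^+2 by nra.
  nra.
have : 0 < fA a s - fA a t by rewrite E; apply: mulr_gt0 => //; lra.
lra.
Qed.

Lemma gA_dec a s t : 1 < a -> 2^-1 <= s -> s < t -> gA a t < gA a s.
Proof.
move=> ha hs st.
have E : gA a s - gA a t = (t-s)*(-4 + 4*a*(s+t) + 8*(s^+2+s*t+t^+2)) by rewrite /gA; ring.
have B : 0 < -4 + 4*a*(s+t) + 8*(s^+2+s*t+t^+2).
  have : 3/4 <= s^+2+s*t+t^+2 by nra.
  nra.
have : 0 < gA a s - gA a t by rewrite E; apply: mulr_gt0 => //; lra.
lra.
Qed.

Lemma sign_lem (F : R -> R) r :
  (forall t, 0 < t -> t <= 2^-1 -> 0 < F t) ->
  (forall s t, 2^-1 <= s -> s < t -> F t < F s) ->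
  2^-1 < r -> F r = 0 ->
  forall t, 0 < t -> (0 < F t <-> t < r) /\ (F t = 0 <-> t = r).
Proof.
move=> Hp Hd hr Fr t ht.
have A : t < r -> 0 < F t.
  move=> tr; case: (lerP t (2^-1)) => th; first exact: Hp.
  by rewrite -Fr; apply: Hd => //; rewrite ltW.
have B : r < t -> F t < 0.
  by move=> rt; rewrite -Fr; apply: Hd => //; rewrite ltW.
split; split.
- move=> Fp; case: (ltgtP t r) => [//|rt|tr].
  + by have := B rt; rewrite ltNge (ltW Fp).
  + by move: Fp; rewrite tr Fr ltxx.
- exact: A.
- move=> F0; case: (ltgtP t r) => [tr|rt|//].
  + by have := A tr; rewrite F0 ltxx.
  + by have := B rt; rewrite F0 ltxx.
- by move=> ->.
Qed.

Lemma cubic_ivt (c0 c1 c2 c3 lo hi : R) : lo <= hi ->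
  0 <= c0 + c1*lo + c2*lo^+2 + c3*lo^+3 ->
  c0 + c1*hi + c2*hi^+2 + c3*hi^+3 <= 0 ->
  exists2 x, lo <= x <= hi & c0 + c1*x + c2*x^+2 + c3*x^+3 = 0.
Proof.
move=> lh h1 h2.
pose p : {poly R} := - (c0%:P + c1%:P * 'X + c2%:P * 'X^2 + c3%:P * 'X^3).
have ev x : p.[x] = - (c0 + c1*x + c2*x^+2 + c3*x^+3).
  by rewrite /p !hornerE.
have hp : p.[lo] <= 0 <= p.[hi] by rewrite !ev; apply/andP; split; lra.
have [x hx rx] := @poly_ivt R p lo hi lh hp.
exists x => //; move/eqP: rx; rewrite ev => /eqP; rewrite oppr_eq0 => /eqP //.
Qed.

Lemma lt_sqrt (L D : R) : L^+2 < D -> L < Num.sqrt D.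
Proof.
move=> h.
have D0 : 0 < D by apply: le_lt_trans h; exact: sqr_ge0.
apply: (le_lt_trans (ler_norm L)).
by rewrite -sqrtr_sqr ltr_sqrt.
Qed.

Lemma eq_sqrt (L D : R) : 0 <= L -> L^+2 = D -> Num.sqrt D = L.
Proof. by move=> h <-; rewrite sqrtr_sqr ger0_norm. Qed.

Lemma lt_invsqrt2 t : 0 < t -> 2 * t^+2 < 1 -> t < (Num.sqrt 2)^-1.
Proof.
move=> t0 h.
have s0 : 0 < Num.sqrt (2:R) by rewrite sqrtr_gt0; lra.
have ss : Num.sqrt (2:R) ^+ 2 = 2 by rewrite sqr_sqrtr //; lra.
have u0 : 0 < (Num.sqrt (2:R))^-1 by rewrite invr_gt0.
have su : Num.sqrt (2:R) * (Num.sqrt 2)^-1 = 1 by rewrite mulfV // gt_eqF.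
set s := Num.sqrt 2 in s0 ss u0 su *; set u := s^-1 in u0 su *.
have x1 : t * s < 1.
  have x0 : 0 <= t * s by apply: mulr_ge0; lra.
  have : (t*s)^+2 < 1 by rewrite exprMn ss; lra.
  nra.
have : t * s * u < u by nra.
by rewrite -mulrA su mulr1.
Qed.


Lemma core (t s D L M F Bs Bss Bup Blow : R) :
  0 < t < 1 -> s = Num.sqrt D -> L^+2 - D = -(1-t^+2)*F^+2 ->
  Bup - Bss = 2/(1-t^+2)*(s-L) -> Blow - Bs = 2/(1-t^+2)*(t*s-M) ->
  t*L - M = F*(t^+2-1) -> (F = 0 -> 0 < L) -> 0 < Bss ->
  (F != 0 -> 0 < Bss < Bup) /\ (F = 0 -> Bs = Blow /\ Bss = Bup).
Proof.
move=> /andP[t0 t1] sE K1 E2 E3 K2 Lp Bp.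
have u0 : 0 < 2/(1-t^+2) by apply: divr_gt0; nra.
split.
- move=> F0; rewrite Bp /=.
  have : L < s.
    rewrite sE; apply: lt_sqrt.
    have : 0 < (1-t^+2)*F^+2 by apply: mulr_gt0; [nra| rewrite lt_def sqrf_eq0 F0 sqr_ge0].
    lra.
  move=> Ls; have : 0 < Bup - Bss by rewrite E2; apply: mulr_gt0 => //; lra.
  lra.
- move=> F0.
  have sL : s = L by rewrite sE; apply: eq_sqrt; [exact: ltW (Lp F0)| move: K1; rewrite F0; lra].
  split.
  + have : Blow - Bs = 0 by rewrite E3 sL; move: K2; rewrite F0 mul0r => ->; rewrite mulr0.
    lra.
  + have : Bup - Bss = 0 by rewrite E2 sL subrr mulr0.
    lra.
Qed.

Lemma part (t r c s D L M F Bs Bss Bup Blow : R) :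
  0 < t < 1 -> s = Num.sqrt D -> L^+2 - D = -(1-t^+2)*F^+2 ->
  Bup - Bss = 2/(1-t^+2)*(s-L) -> Blow - Bs = 2/(1-t^+2)*(t*s-M) ->
  t*L - M = F*(t^+2-1) -> (F = 0 -> 0 < L) -> 0 < Bss ->
  Bs - t * Bss = c + 2 * F ->
  (0 < F <-> t < r) -> (F = 0 <-> t = r) ->
  [/\ (Bs - t * Bss = c <-> t = r),
      (Bs = Blow /\ Bss = Bup <-> t = r),
      (Bs - t * Bss > c <-> t < r)
    & (t != r -> 0 < Bss < Bup)].
Proof.
move=> ht sE K1 E2 E3 K2 Lp Bp E1 [S1 S2] [Z1 Z2].
have [C1 C2] := @core t s D L M F Bs Bss Bup Blow ht sE K1 E2 E3 K2 Lp Bp.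
have Fn : t != r -> F != 0 by move=> tr; apply/eqP => /Z1 /eqP; rewrite (negbTE tr).
split.
- rewrite E1; split.
  + by move=> h; apply: Z1; lra.
  + by move=> /Z2 ->; rewrite mulr0 addr0.
- split.
  + move=> [h1 h2]; apply/eqP; apply/negP => /negP tr.
    by have /andP[_] := C1 (Fn tr); rewrite h2 ltxx.
  + by move=> /Z2 /C2.
- rewrite E1; split.
  + by move=> h; apply: S1; lra.
  + by move=> /S2 h; lra.
- by move=> tr; apply: C1; apply: Fn.
Qed.

End S.
Arguments fA {R}. Arguments gA {R}.

Theorem mainTheorem13 (R : realType) (N : nat) (hN : (0 < N)%N) :
  exists t1 t2 : R,
    [/\ 2^-1 < t2, t2 < t1 & t1 < (Num.sqrt 2)^-1] /\
    (* (i) *)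
    (forall t : R, 0 < t < 1 ->
      [/\ (beta2_s N t - t * beta1_ss N t = 2 <-> t = t1),
          (beta2_s N t = beta2_low N t /\ beta1_ss N t = beta1_up N t <-> t = t1),
          (beta2_s N t - t * beta1_ss N t > 2 <-> t < t1)
        & (t != t1 -> 0 < beta1_ss N t < beta1_up N t)]) /\
    (* (ii) *)
    (forall t : R, 0 < t < 1 ->
      [/\ (beta1_s N t - t * beta2_ss N t = 2 * (N.+1)%:R <-> t = t2),
          (beta1_s N t = beta1_low N t /\ beta2_ss N t = beta2_up N t <-> t = t2),
          (beta1_s N t - t * beta2_ss N t > 2 * (N.+1)%:R <-> t < t2)
        & (t != t2 -> 0 < beta2_ss N t < beta2_up N t)]).
Proof.
pose a : R := (N.+1)%:R.
have ha : 1 < a by rewrite /a ltr1n ltnS lt0n -lt0n.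
have [t1 /andP[l1 h1] r1] : exists2 x : R, 2^-1 <= x <= 1 &
    1 + 4*a*x + (-4)*x^+2 + (-8*a)*x^+3 = 0.
  apply: cubic_ivt; lra.
have [t2 /andP[l2 h2] r2] : exists2 x : R, 2^-1 <= x <= 1 &
    a + 4*x + (-4*a)*x^+2 + (-8)*x^+3 = 0.
  apply: cubic_ivt; lra.
have f1 : fA a t1 = 0 by rewrite /fA -r1; ring.
have g2 : gA a t2 = 0 by rewrite /gA -r2; ring.
have l1' : 2^-1 < t1.
  rewrite lt_def l1 andbT; apply/eqP => e; move: f1; rewrite e /fA; nra.
have l2' : 2^-1 < t2.
  rewrite lt_def l2 andbT; apply/eqP => e; move: g2; rewrite e /gA; nra.
have S1 := @sign_lem R (fA a) t1 (fun t t0 th => @fA_pos R a t ha t0 th)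
  (fun s t hs st => @fA_dec R a s t ha hs st) l1' f1.
have S2 := @sign_lem R (gA a) t2 (fun t t0 th => @gA_pos R a t ha t0 th)
  (fun s t hs st => @gA_dec R a s t ha hs st) l2' g2.
exists t1, t2; split.
  split => //.
  - have : 0 < fA a t2.
      have -> : fA a t2 = a * gA a t2 - (a^+2-1)*(1-4*t2^+2) by rewrite /fA /gA; ring.
      rewrite g2 mulr0 sub0r; have : 0 < a^+2-1 by nra.
      move=> A0; have : (a^+2-1)*(1-4*t2^+2) < 0 by rewrite pmulr_rlt0 //; nra.
      lra.
    by move=> /(proj1 (S1 t2 ltac:(lra))).1.
  - apply: lt_invsqrt2; first lra.
    have P : 0 < (4*a*t1)*(1-2*t1^+2) by move: f1; rewrite /fA; nra.
    have : 0 < 1 - 2*t1^+2 by rewrite -(pmulr_rgt0 _ (_ : 0 < 4*a*t1)) //; nra.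
    lra.
split.
- move=> t ht.
  have t0 : 0 < t by case/andP: ht.
  have u0 : 1 - t^+2 != 0 by apply/eqP; nra.
  have [S1a S1b] := S1 t t0.
  apply: (@part R t t1 2 (Num.sqrt (Dd N t)) (Dd N t) (4*t*(1+2*t*a)*(1-t^+2) - a - t)
    ((2+4*t*a)*(1-t^+2) - 1 - t*a) (fA a t)) => //.
  + rewrite /Dd /fA /a; ring.
  + rewrite /beta1_up /beta1_ss /a; field; exact: u0.
  + rewrite /beta2_low /beta2_s /a; field; exact: u0.
  + rewrite /fA; ring.
  + move=> F0; have : 0 < 4*a*t^+2 + 2*t - a.
      rewrite (proj1 S1b F0); have : 0 < a * t1 by nra.
      nra.
    have -> : 4*t*(1+2*t*a)*(1-t^+2) - a - t = t * fA a t + (4*a*t^+2 + 2*t - a) by rewrite /fA; ring.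
    by rewrite F0 mulr0 add0r.
  + rewrite /beta1_ss; apply: mulr_gt0; [lra | ].
    have : 0 < t * a by nra.
    lra.
  + rewrite /beta2_s /beta1_ss /fA /a; ring.
- move=> t ht.
  have t0 : 0 < t by case/andP: ht.
  have u0 : 1 - t^+2 != 0 by apply/eqP; nra.
  have [S2a S2b] := S2 t t0.
  apply: (@part R t t2 (2 * a) (Num.sqrt (Dd N t)) (Dd N t) (4*t*(a+2*t)*(1-t^+2) - 1 - t*a)
    ((2*a+4*t)*(1-t^+2) - a - t) (gA a t)) => //.
  + rewrite /Dd /gA /a; ring.
  + rewrite /beta2_up /beta2_ss /a; field; exact: u0.
  + rewrite /beta1_low /beta1_s /a; field; exact: u0.
  + rewrite /gA; ring.
  + move=> F0; have : 0 < 2*a*t + 4*t^+2 - 1.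
      rewrite (proj1 S2b F0); have : 0 < a * t2 by nra.
      nra.
    have -> : 4*t*(a+2*t)*(1-t^+2) - 1 - t*a = t * gA a t + (2*a*t + 4*t^+2 - 1) by rewrite /gA; ring.
    by rewrite F0 mulr0 add0r.
  + rewrite /beta2_ss; apply: mulr_gt0; [lra | ].
    have : 0 < a by lra.
    lra.
  + rewrite /beta1_s /beta2_ss /gA /a; ring.
Qed.
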